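(* Let $n\ge 1$ and $N\ge 1$ be integers, and let $Z_1,\dots,Z_n,Y_1,\dots,Y_N$ be independent identically distributed random variables with values in $[0,1]$ and mean $\mu$. Let $\overline Z=\frac1n\sum_{t=1}^n Z_t$ and $\overline X^{n+N}=\frac{n\overline Z+\sum_{t=1}^N Y_t}{n+N}$. Let $a\in\mathbb R$ be a constant and $d>0$. Then $$\Pr\!\left(\overline Z\le a-d\ \text{ and }\ \overline X^{n+N}\ge a\right)\le 2\exp\!\left(-\varphi\, d^2\, n\right)$$ and $$\Pr\!\left(\overline Z\ge a+d\ \text{ and }\ \overline X^{n+N}\le a\right)\le 2\exp\!\left(-\varphi\, d^2\, n\right),$$ where $$\varphi=\min_{r\ge 0}\,2\left(\frac{1+r}{1+\sqrt r}\right)^2=8(\sqrt2-1)^2>1.37 .$$ (In the application, for $i\ne\alpha$: $Z$ are the first $n=n_i$ samples of arm $i$, $a=\overline X_\alpha^{n_\alpha}$ and $d=\overline X_\alpha^{n_\alpha}-\overline X_i^{n_i}$; for arm $\alpha$: $n=n_\alpha$, $a=\overline X_\beta^{n_\beta}$ and $d=\overline X_\alpha^{n_\alpha}-\overline X_\beta^{n_\beta}$.)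
   Context: $\overline X_j^{n_j}$ denotes the sample mean of the first $n_j$ samples of arm $j$; $\alpha$ is the arm with the largest sample mean and $\beta$ the arm with the second largest. The quantity $\overline X^{n+N}$ is the sample mean of an arm after $N$ further samples beyond the first $n$. *)

(* Defs.v *)
From HB Require Import structures.
From mathcomp Require Import all_boot all_order all_algebra.
From mathcomp Require Import all_classical all_reals all_analysis.
Set Implicit Arguments. Unset Strict Implicit. Unset Printing Implicit Defensive.
Import Order.TTheory GRing.Theory Num.Theory.
Local Open Scope classical_set_scope.
Local Open Scope ring_scope.

Definition mutually_independent_RVs d (T : measurableType d) (R : realType)
  (P : probability T R) (m : nat) (X : 'I_m -> {RV P >-> R}) : Prop :=
  forall (J : {set 'I_m}) (B : 'I_m -> set R),
    (forall j, measurable (B j)) ->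
    P (\bigcap_(j in [set j | j \in J]) (X j @^-1` B j)) =
    (\prod_(j in J) P (X j @^-1` B j))%E.

Definition identically_distributed_RVs d (T : measurableType d) (R : realType)
  (P : probability T R) (m : nat) (X : 'I_m -> {RV P >-> R}) : Prop :=
  forall (i j : 'I_m) (B : set R), measurable B ->
    P (X i @^-1` B) = P (X j @^-1` B).

Definition varphi (R : realType) : R := 8 * (Num.sqrt 2 - 1) ^+ 2.

(* Main.v *)
Require Import Defs.
From HB Require Import structures.
From mathcomp Require Import all_boot all_order all_algebra.
From mathcomp Require Import all_classical all_reals all_analysis.
From mathcomp Require Import ring lra.
From mathcomp Require Import measurable_realfun.
Import Order.TTheory GRing.Theory Num.Theory.
Import numFieldNormedType.Exports.
Local Open Scope classical_set_scope.
Local Open Scope ring_scope.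
Section An.
Variable R : realType.

Lemma deriv_mono (f df : R -> R) (a b : R) : a <= b ->
  (forall x : R, is_derive x (1:R) f (df x)) ->
  (forall x, a <= x <= b -> 0 <= df x) -> f a <= f b.
Proof.
move=> ab fd dpos.
have cont : {within `[a, b], continuous f}.
  apply: derivable_within_continuous => x _; exact: ex_derive.
have [c cab E] := MVT_segment ab (fun x _ => fd x) cont.
rewrite -subr_ge0 E mulr_ge0 ?subr_ge0//; apply: dpos.
by move: cab; rewrite in_itv.
Qed.

Let g (z : R) := 2 + z - (2 - z) * expR z.

Lemma g_deriv (x : R) : is_derive x (1:R) g (1 - (1 - x) * expR x).
Proof. apply: is_derive_eq. rewrite /GRing.scale /=. ring. Qed.

Lemma g_deriv_ge0 (x : R) : 0 <= 1 - (1 - x) * expR x.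
Proof.
have h1 := expR_ge1Dx (- x). have h2 := expRxMexpNx_1 x. have h3 := expR_gt0 x.
have : (1 - x) * expR x <= expR (- x) * expR x by rewrite ler_pM2r.
rewrite mulrC in h2. lra.
Qed.

Lemma g0 : g 0 = 0.
Proof. rewrite /g expR0. ring. Qed.

Lemma g_ge0 z : 0 <= z -> 0 <= g z.
Proof.
move=> z0; rewrite -g0; apply: deriv_mono z0 g_deriv _ => x _.
exact: g_deriv_ge0.
Qed.

Lemma g_le0 z : z <= 0 -> g z <= 0.
Proof.
move=> z0; rewrite -g0; apply: deriv_mono z0 g_deriv _ => x _.
exact: g_deriv_ge0.
Qed.

Let K (s x : R) := s * expR x - (1 - s + s * expR x) * (s + x / 4).

Lemma K_sign (s x : R) : 0 <= s <= 1 ->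
  (0 <= x -> K s x <= 0) /\ (x <= 0 -> 0 <= K s x).
Proof.
move=> /andP[s0 s1].
set v := expR (x / 2).
have ev : expR x = v * v by rewrite /v -expRD; congr expR; field.
have v0 : 0 < v := expR_gt0 _.
have gv : g (x / 2) = 2 + x/2 - (2 - x/2) * v by [].
set W := ((1 - s) - s * v) ^+ 2.
have W0 : 0 <= W by rewrite /W sqr_ge0.
have vv := mulr_gt0 v0 v0.
have D0 : 0 < 1 - s + s * (v * v).
  have := mulr_ge0 s0 (ltW vv).
  case: (ltrP s 1) => hs; first lra.
  have -> : s = 1 by lra.
  lra.
have iden : (v + 1) * K s x =
  - ((1 - s + s * (v * v)) * (g (x / 2) / 2) + (v - 1) * W).
  by rewrite /K ev gv /W; field.
split=> [hx|hx].
- have vg1 : 1 <= v.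
    have := expR_ge1Dx (x/2); rewrite -/v; lra.
  have gg : 0 <= g (x/2) by apply: g_ge0; lra.
  have : 0 <= (v + 1) * (- K s x).
    rewrite mulrN iden opprK; apply: addr_ge0; apply: mulr_ge0 => //; lra.
  rewrite pmulr_rge0; [lra|lra].
- have vg1 : v <= 1 by rewrite /v expR_le1; lra.
  have gg : g (x/2) <= 0 by apply: g_le0; lra.
  have : 0 <= (v + 1) * (K s x).
    have h1 : (1 - s + s * (v * v)) * (g (x / 2) / 2) <= 0.
      apply: mulr_ge0_le0; lra.
    have h2 : (v - 1) * W <= 0 by apply: mulr_le0_ge0 => //; lra.
    rewrite iden; lra.
  rewrite pmulr_rge0; [lra|lra].
Qed.

Let G (s c : R) := (1 - s + s * expR c) * expR (- (c * s) - c ^+ 2 / 8).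

Lemma G_deriv (s x : R) :
  is_derive x (1:R) (G s) (expR (- (x * s) - x ^+ 2 / 8) * K s x).
Proof.
rewrite /G. apply: is_derive_eq.
by rewrite /K /GRing.scale /=; field.
Qed.

Lemma G0 s : G s 0 = 1.
Proof. by rewrite /G expR0 !(mul0r, mulr0, expr0n, oppr0, subr0, expR0, mulr1) subrK. Qed.

Lemma hoeffding_lemma (s c : R) : 0 <= s <= 1 ->
  1 - s + s * expR c <= expR (c * s + c ^+ 2 / 8).
Proof.
move=> s01.
have GE : G s c <= 1.
  rewrite -(G0 s).
  case: (lerP 0 c) => hc.
  - rewrite -lerN2.
    apply: (@deriv_mono (- G s) (fun x => - (expR (- (x * s) - x ^+ 2 / 8) * K s x))) => //.
      by move=> x; apply: is_deriveN; exact: G_deriv.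
    move=> x /andP[x0 _]; rewrite oppr_ge0; apply: mulr_ge0_le0; first exact: expR_ge0.
    by case: (K_sign s x s01) => + _; apply.
  - apply: (@deriv_mono (G s) (fun x => expR (- (x * s) - x ^+ 2 / 8) * K s x)) => //.
      exact: ltW.
      exact: G_deriv.
    move=> x /andP[_ x0]; apply: mulr_ge0; first exact: expR_ge0.
    by case: (K_sign s x s01) => _; apply.
move: GE; rewrite /G.
have -> : - (c * s) - c ^+ 2 / 8 = - (c * s + c ^+ 2 / 8) by ring.
by rewrite expRN ler_pdivrMr ?expR_gt0 // mul1r.
Qed.

Let F (x c : R) := 1 - x + x * expR c - expR (c * x).

Lemma F_deriv (x c : R) : is_derive c (1:R) (F x) (x * expR c - x * expR (c * x)).
Proof. rewrite /F. apply: is_derive_eq. by rewrite /GRing.scale /=; ring. Qed.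

Lemma conv_exp (x c : R) : 0 <= x <= 1 -> expR (c * x) <= 1 - x + x * expR c.
Proof.
move=> /andP[x0 x1].
have F0 : F x 0 = 0 by rewrite /F mul0r expR0; ring.
suff : 0 <= F x c by rewrite /F; lra.
case: (lerP 0 c) => hc.
- rewrite -F0; apply: deriv_mono hc (F_deriv x) _ => t /andP[t0 _].
  rewrite -mulrBr mulr_ge0 // subr_ge0 ler_expR; nra.
- have : - F x c <= - F x 0.
    apply: (@deriv_mono (- F x) (fun t => - (x * expR t - x * expR (t * x)))) => //.
      exact: ltW.
      by move=> t; apply: is_deriveN; exact: F_deriv.
    move=> t /andP[_ t0]; rewrite oppr_ge0 -mulrBr mulr_ge0_le0 // subr_le0 ler_expR; nra.
  by rewrite F0; lra.
Qed.

End An.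

Section Phi.
Variable R : realType.
Let q : R := Num.sqrt 2.
Let q0 : 0 <= q. Proof. exact: sqrtr_ge0. Qed.
Let q2 : q * q = 2. Proof. by rewrite -expr2 sqr_sqrtr. Qed.
Let q_gt : 1414 / 1000 < q.
Proof. have qz := q0; have qq := q2; rewrite ltNge; apply/negP => h. nra. Qed.

Lemma varphi_le2 : varphi R <= 2.
Proof. rewrite /varphi -/q. have := q0; have := q2; have := q_gt. nra. Qed.

Lemma varphi_gt : 137 / 100 < varphi R.
Proof. rewrite /varphi -/q. have := q0; have := q2; have := q_gt. nra. Qed.

Lemma varphi_min (r : R) : 0 <= r -> varphi R <= 2 * ((1 + r) / (1 + Num.sqrt r)) ^+ 2.
Proof.
move=> r0; rewrite /varphi -/q. have := q0; have := q2; have := q_gt => qg qq qz.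
set s := Num.sqrt r.
have s0 : 0 <= s := sqrtr_ge0 r.
have s2 : s * s = r by rewrite -expr2 sqr_sqrtr.
have h : 2 * (q - 1) <= (1 + r) / (1 + s).
  rewrite ler_pdivlMr; last lra.
  rewrite -subr_ge0.
  have -> : 1 + r - 2 * (q - 1) * (1 + s) = (s - q + 1) ^+ 2 + (2 - q * q).
    by rewrite -s2; ring.
  by rewrite qq subrr addr0 sqr_ge0.
have h0 : 0 <= 2 * (q - 1) by nra.
nra.
Qed.

Lemma varphi_attained : exists2 r : R, 0 <= r & varphi R = 2 * ((1 + r) / (1 + Num.sqrt r)) ^+ 2.
Proof.
exists ((q - 1) ^+ 2); first exact: sqr_ge0.
have := q0; have := q2; have := q_gt => qg qq qz.
rewrite /varphi -/q sqrtr_sqr ger0_norm; last nra.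
have E : 1 + (q - 1) ^+ 2 = (1 + (q - 1)) * (2 * (q - 1)) by nra.
have nz : 1 + (q - 1) != 0 by rewrite lt0r_neq0 //; lra.
rewrite E; field.
exact: nz.
Qed.
End Phi.

Section Bins.
Variable R : realType.
Variable M : nat.
Hypothesis M0 : (0 < M)%N.

Definition xg (j : 'I_M.+1) : R := j%:R / M%:R.
Definition bin (j : 'I_M.+1) : set R := `[xg j, xg j + M%:R^-1[%classic.
Definition bin_of (x : R) : 'I_M.+1 := inord (Num.truncn (x * M%:R)).

Let m0 : 0 < (M%:R : R). Proof. by rewrite ltr0n. Qed.

Lemma binP (j : nat) (x : R) :
  (j%:R / M%:R <= x < j%:R / M%:R + M%:R^-1) = (j%:R <= x * M%:R < j.+1%:R).
Proof.
rewrite -[j.+1]addn1 natrD -[X in _ + X](mul1r (M%:R^-1)) -mulrDl.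
by rewrite !ler_pdivrMr // ltr_pdivlMr.
Qed.

Lemma bin_of_val (x : R) : 0 <= x <= 1 -> (bin_of x : nat) = Num.truncn (x * M%:R).
Proof.
move=> /andP[x0 x1]; rewrite /bin_of inordK // ltnS truncn_le_nat.
have : x * M%:R <= M%:R by rewrite ler_piMl // ltW.
rewrite -[M.+1]addn1 natrD; lra.
Qed.

Lemma bin_ofP (x : R) : 0 <= x <= 1 -> bin (bin_of x) x.
Proof.
move=> x01; rewrite /bin /xg /= in_itv /= bin_of_val // binP.
apply: truncn_itv; rewrite mulr_ge0 //; first by case/andP: x01.
Qed.

Lemma bin_uniq (x : R) (j : 'I_M.+1) : 0 <= x <= 1 -> bin j x -> j = bin_of x.
Proof.
move=> x01; rewrite /bin /xg /= in_itv /= binP => H.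
apply: val_inj; rewrite /= bin_of_val //; apply/esym/truncn_def; exact: H.
Qed.

Lemma indic_bin (x : R) (j : 'I_M.+1) : 0 <= x <= 1 ->
  \1_(bin j) x = (j == bin_of x)%:R :> R.
Proof.
move=> x01; rewrite indicE; case: eqP => [->|ne].
  by rewrite mem_set //; exact: bin_ofP.
by rewrite memNset // => /(@bin_uniq x j x01).
Qed.

Lemma xg01 (j : 'I_M.+1) : 0 <= xg j <= 1.
Proof.
rewrite /xg divr_ge0 //= ler_pdivrMr // mul1r ler_nat.
by rewrite -ltnS ltn_ord.
Qed.

Lemma bin_near (x : R) (j : 'I_M.+1) : bin j x -> xg j <= x <= xg j + M%:R^-1.
Proof. by rewrite /bin /= in_itv /= => /andP[-> /ltW ->]. Qed.

Lemma sum_bin (a : 'I_M.+1 -> R) (x : R) : 0 <= x <= 1 ->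
  \sum_j a j * \1_(bin j) x = a (bin_of x).
Proof.
move=> x01; rewrite (bigD1 (bin_of x)) //= indic_bin // eqxx mulr1 big1 ?addr0 //.
by move=> j /negbTE hj; rewrite indic_bin // hj mulr0.
Qed.

Lemma bin_measurable j : measurable (bin j).
Proof. exact: measurable_itv. Qed.

End Bins.
Arguments xg {R} M j.
Arguments bin {R} M j.
Arguments bin_of {R} M x.
Arguments bin_of_val {R M} x.
Arguments bin_ofP {R M} M0 {x}.
Arguments bin_uniq {R M} M0 x j.
Arguments indic_bin {R M} M0 x j.
Arguments xg01 {R M} M0 j.
Arguments bin_near {R M x j}.
Arguments sum_bin {R M} M0 a x.
Arguments bin_measurable {R} M j.

Section Prob.
Context (d : measure_display) (T : measurableType d) (R : realType) (P : probability T R).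

Lemma mfun_scale_indic (w : R) (S : set T) : measurable S ->
  measurable_fun [set: T] (EFin \o (fun x => w * \1_S x)).
Proof.
move=> mS; apply/measurable_EFinP.
by apply: measurable_funM => //; apply: measurable_indic.
Qed.

Lemma int_simple (I : finType) (w : I -> R) (S : I -> set T) :
  (forall k, 0 <= w k) -> (forall k, measurable (S k)) ->
  (\int[P]_x (\sum_k w k * \1_(S k) x)%:E = \sum_k (w k)%:E * P (S k))%E.
Proof.
move=> w0 mS.
under eq_integral do rewrite -sumEFin.
rewrite ge0_integral_sum //; last first.
  by move=> k x _; rewrite lee_fin mulr_ge0 // indicE.
  by move=> k; exact: mfun_scale_indic.
apply: eq_bigr => k _.
under eq_integral do rewrite EFinM.
rewrite ge0_integralZl_EFin //.
- by rewrite integral_indic // setIT.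
- by apply: (proj2 (measurable_EFinP _ _)); exact: measurable_indic.
Qed.


Lemma msimple (I : finType) (w : I -> R) (S : I -> set T) :
  (forall k, measurable (S k)) ->
  measurable_fun [set: T] (fun x => (\sum_k w k * \1_(S k) x)%:E).
Proof.
move=> mS; apply: (proj2 (measurable_EFinP _ _)).
apply: measurable_sum => k; apply: measurable_funM => //.
Qed.

Lemma indic_pre (X : T -> R) (B : set R) x : \1_(X @^-1` B) x = \1_B (X x) :> R.
Proof. by []. Qed.

Section OneVar.
Variables (X : {RV P >-> R}) (mu : R) (M : nat).
Hypothesis M0 : (0 < M)%N.
Hypothesis X01 : forall w, 0 <= X w <= 1.
Hypothesis EX : ('E_P[X] = mu%:E)%E.

Definition q (j : 'I_M.+1) := fine (P (X @^-1` bin M j)).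

Lemma mpre j : measurable (X @^-1` bin M j).
Proof. exact: (measurable_funPTI X (bin_measurable M j)). Qed.

Lemma Pq j : P (X @^-1` bin M j) = (q j)%:E.
Proof. by rewrite /q fineK //; apply: fin_num_measure; exact: mpre. Qed.

Lemma q_ge0 j : 0 <= q j.
Proof. by rewrite /q fine_ge0 // measure_ge0. Qed.

Lemma int_bins (a : 'I_M.+1 -> R) : (forall j, 0 <= a j) ->
  (\int[P]_x (\sum_j a j * \1_(X @^-1` bin M j) x)%:E = (\sum_j a j * q j)%:E)%E.
Proof.
move=> a0; rewrite int_simple //; last exact: mpre.
rewrite -sumEFin; apply: eq_bigr => j _; by rewrite Pq EFinM.
Qed.

Lemma pw_bins (a : 'I_M.+1 -> R) x :
  \sum_j a j * \1_(X @^-1` bin M j) x = a (bin_of M (X x)).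
Proof.
under eq_bigr do rewrite indic_pre.
exact: sum_bin.
Qed.

Lemma sum_q : \sum_j q j = 1.
Proof.
have := int_bins (fun=> 1) (fun=> ler01).
under eq_integral do rewrite pw_bins.
rewrite (_ : (fun x => (1:R)%:E) = cst 1%E) // integral_cst // mul1e => H.
have := probability_setT P; rewrite H => -[<-].
by apply: eq_bigr => j _; rewrite mul1r.
Qed.

Lemma sum_qx_le : \sum_j q j * xg M j <= mu.
Proof.
rewrite -lee_fin -EX expectation_def.
under eq_bigr do rewrite mulrC.
rewrite -int_bins; last by move=> j; have /andP[] := xg01 (R:=R) M0 j.
apply: ge0_le_integral => //.
- move=> x _; rewrite lee_fin pw_bins; by case/andP: (xg01 (R:=R) M0 (bin_of M (X x))).
- exact: msimple mpre.
- apply: (proj2 (measurable_EFinP _ _)); exact: measurable_funPT.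
- move=> x _; rewrite lee_fin pw_bins.
  by case/andP: (bin_near (bin_ofP M0 (X01 x))).
Qed.

Lemma mu_le_sum_qx : mu <= \sum_j q j * xg M j + M%:R^-1.
Proof.
have -> : \sum_j q j * xg M j + M%:R^-1 = \sum_j (xg M j + M%:R^-1) * q j.
  rewrite -[X in _ + X]mulr1 -sum_q mulr_sumr -big_split /=.
  by apply: eq_bigr => j _; ring.
rewrite -lee_fin -EX expectation_def -int_bins; last first.
  move=> j; case/andP: (xg01 (R:=R) M0 j) => + _; move=> h; rewrite addr_ge0 // invr_ge0 //.
apply: ge0_le_integral => //.
- move=> x _; rewrite lee_fin; by case/andP: (X01 x).
- apply: (proj2 (measurable_EFinP _ _)); exact: measurable_funPT.
- exact: msimple mpre.
- move=> x _; rewrite lee_fin pw_bins.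
  by case/andP: (bin_near (bin_ofP M0 (X01 x))).
Qed.


Lemma var_bound (c : R) :
  \sum_j q j * expR (c * xg M j) <= expR (c * mu + c ^+ 2 / 8 + `|c| / M%:R).
Proof.
set s := \sum_j q j * xg M j.
have s0 : 0 <= s.
  by apply: sumr_ge0 => j _; apply: mulr_ge0; [exact: q_ge0| have /andP[] := xg01 (R:=R) M0 j].
have s1 : s <= 1.
  rewrite -sum_q; apply: ler_sum => j _; rewrite -[leRHS]mulr1; apply: ler_wpM2l; first exact: q_ge0.
  by have /andP[] := xg01 (R:=R) M0 j.
have E1 : \sum_j q j * (1 - xg M j + xg M j * expR c) = 1 - s + s * expR c.
  rewrite -[in RHS]sum_q /s mulr_suml -sumrB -big_split /=.
  by apply: eq_bigr => j _; ring.
apply: (le_trans (y := 1 - s + s * expR c)).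
  rewrite -E1; apply: ler_sum => j _; apply: ler_wpM2l; first exact: q_ge0.
  exact: conv_exp (xg01 (R:=R) M0 j).
have s01 : 0 <= s <= 1 by rewrite s0 s1.
apply: (le_trans (@hoeffding_lemma R s c s01)); rewrite ler_expR.
have h1 : s <= mu := sum_qx_le.
have h2 : mu <= s + M%:R^-1 := mu_le_sum_qx.
suff : c * s <= c * mu + `|c| / M%:R by lra.
case: (lerP 0 c) => hc.
- rewrite ger0_norm //.
  have : c * s <= c * mu by rewrite ler_wpM2l.
  have : 0 <= c / M%:R by rewrite divr_ge0.
  lra.
- rewrite ltr0_norm //.
  have : c * (s + M%:R^-1) <= c * mu by rewrite ler_wnM2l // ltW.
  rewrite mulrDr; lra.
Qed.
End OneVar.

Lemma lin_near (c x0 y e : R) : 0 <= e -> x0 <= y <= x0 + e -> c * y <= c * x0 + `|c| * e.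
Proof.
move=> e0 /andP[h1 h2]; case: (lerP 0 c) => hc.
- rewrite ger0_norm //.
  have : c * y <= c * (x0 + e) by rewrite ler_wpM2l.
  by rewrite mulrDr.
- rewrite ltr0_norm //.
  have : c * y <= c * x0 by rewrite ler_wnM2l // ltW.
  have : 0 <= - c * e by rewrite mulr_ge0 // oppr_ge0 ltW.
  lra.
Qed.

Section Gen.
Variables (m0 : nat) (X : 'I_m0 -> {RV P >-> R}) (mu : R).
Hypothesis indep : mutually_independent_RVs X.
Hypothesis X01 : forall i w, 0 <= X i w <= 1.
Hypothesis EX : forall i, ('E_P[X i] = mu%:E)%E.

Definition box M (k : {ffun 'I_m0 -> 'I_M.+1}) : set T :=
  \bigcap_(j in [set j | j \in [set: 'I_m0]%SET]) (X j @^-1` bin M (k j)).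

Lemma box_measurable M k : measurable (box M k).
Proof. apply: fin_bigcap_measurable; first exact: finite_finset. move=> j _; exact: mpre. Qed.

Lemma P_box M k : P (box M k) = (\prod_i q (X i) M (k i))%:E.
Proof.
rewrite /box (indep [set: 'I_m0]%SET (fun j => bin M (k j))); last by move=> j; exact: bin_measurable.
rewrite -prodEFin; apply: eq_big => [j|j _]; first by rewrite inE.
exact: Pq.
Qed.

Lemma gen_bound (c : 'I_m0 -> R) (t : R) (A : set T) :
  measurable A -> (forall w, A w -> t <= \sum_i c i * X i w) ->
  (P A <= (2 * expR (- t + \sum_i (c i * mu + c i ^+ 2 / 8)))%:E)%E.
Proof.
move=> mA HA.
set C := \sum_i `|c i|.
have C0 : 0 <= C by apply: sumr_ge0 => i _.
pose M := (Num.truncn (4 * C)).+1.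
have M0 : (0 < M)%N by [].
have Mpos : 0 < (M%:R : R) by rewrite ltr0n.
have CM : 2 * C / M%:R <= 1 / 2.
  have : 4 * C < M%:R := truncnS_gt _.
  rewrite ler_pdivrMr // => h; lra.
pose w (k : {ffun 'I_m0 -> 'I_M.+1}) :=
  expR (\sum_i (c i * xg M (k i) + `|c i| * M%:R^-1) - t).
have w0 k : 0 <= w k by exact: expR_ge0.
have step1 : (P A <= \sum_k (w k)%:E * P (box M k))%E.
  rewrite -int_simple //; last exact: box_measurable.
  rewrite -[X in P X](setIT A) -integral_indic //.
  apply: ge0_le_integral => //.
  - by apply: (proj2 (measurable_EFinP _ _)); exact: measurable_indic.
  - apply: (@msimple _ w (box M)) => k; exact: box_measurable.
  move=> x _; rewrite lee_fin indicE.
  case: (boolP (x \in A)) => xA; last first.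
    by rewrite /= sumr_ge0 // => k _; rewrite mulr_ge0 // indicE.
  pose k0 : {ffun 'I_m0 -> 'I_M.+1} := [ffun i => bin_of M (X i x)].
  have xk0 : box M k0 x.
    move=> j _; rewrite /k0 ffunE /=; exact: bin_ofP.
  rewrite (bigD1 k0) //= indicE mem_set // mulr1.
  have : 1 <= w k0.
    rewrite /w.
    have := expR_ge1Dx (\sum_i (c i * xg M (k0 i) + `|c i| * M%:R^-1) - t).
    suff : 0 <= \sum_i (c i * xg M (k0 i) + `|c i| * M%:R^-1) - t by lra.
    rewrite subr_ge0; apply: (le_trans (HA x _)); first by rewrite -in_setE.
    apply: ler_sum => i _; apply: lin_near; first by rewrite invr_ge0 ltW.
    rewrite /k0 ffunE; exact: bin_near (bin_ofP M0 (X01 i x)).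
  have : 0 <= \sum_(k | k != k0) w k * \1_(box M k) x.
    by apply: sumr_ge0 => k _; rewrite mulr_ge0 // indicE.
  rewrite /=; lra.
have step2 : (\sum_k (w k)%:E * P (box M k) =
    (\sum_k w k * \prod_i q (X i) M (k i))%:E)%E.
  rewrite -sumEFin; apply: eq_bigr => k _; by rewrite P_box -EFinM.
have step3 : \sum_k w k * \prod_i q (X i) M (k i) = expR (- t) *
    \prod_i \sum_j q (X i) M j * expR (c i * xg M j + `|c i| * M%:R^-1).
  rewrite bigA_distr_bigA mulr_sumr; apply: eq_bigr => k _.
  rewrite /w addrC expRD expR_sum -mulrA -big_split /=.
  by congr (_ * _); apply: eq_bigr => i _; rewrite mulrC.
have step4 : \prod_i \sum_j q (X i) M j * expR (c i * xg M j + `|c i| * M%:R^-1)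
    <= \prod_i expR (c i * mu + c i ^+ 2 / 8 + 2 * (`|c i| * M%:R^-1)).
  apply: ler_prod => i _; apply/andP; split.
    by apply: sumr_ge0 => j _; rewrite mulr_ge0 ?expR_ge0 ?q_ge0.
  under eq_bigr do rewrite expRD mulrA.
  rewrite -mulr_suml.
  have := var_bound (X i) mu M M0 (X01 i) (EX i) (c i).
  move=> /(ler_wpM2r (expR_ge0 (`|c i| * M%:R^-1))).
  move/le_trans; apply.
  by rewrite -expRD ler_expR; lra.
apply: (le_trans step1); rewrite step2 lee_fin step3.
apply: (le_trans (ler_wpM2l (expR_ge0 _) step4)).
rewrite -expR_sum -expRD.
have eb : - t + \sum_i (c i * mu + c i ^+ 2 / 8 + 2 * (`|c i| * M%:R^-1)) =
    (- t + \sum_i (c i * mu + c i ^+ 2 / 8)) + 2 * C / M%:R.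
  rewrite big_split /= -addrA; congr (_ + _); rewrite -mulr_sumr -mulr_suml /C mulrA. by [].
rewrite eb expRD mulrC ler_wpM2r ?expR_ge0 //.
apply: (le_trans (y := expR (1/2))); first by rewrite ler_expR.
have h1 := expR_ge1Dx (- (1/2 : R)).
have h2 := expRxMexpNx_1 (1/2 : R).
have h3 := expR_gt0 (1/2 : R).
have : expR (1/2 : R) * (1/2) <= expR (1/2 : R) * expR (- (1/2)) by apply: ler_wpM2l; [exact: ltW | lra].
rewrite h2; lra.
Qed.

End Gen.

Lemma mpreT (f : T -> R) (Y : set R) :
  measurable_fun [set: T] f -> measurable Y -> measurable (f @^-1` Y).
Proof. move=> mf mY; rewrite -(setTI (f @^-1` Y)). apply: mf => //. Qed.

Lemma two_group (n N : nat) (X : 'I_(n + N) -> {RV P >-> R}) (mu sg dd : R) (A : set T) :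
  (0 < n)%N -> (0 < N)%N -> mutually_independent_RVs X ->
  (forall i w, 0 <= X i w <= 1) -> (forall i, ('E_P[X i] = mu%:E)%E) ->
  sg ^+ 2 = 1 -> 0 < dd -> measurable A ->
  (forall w, A w -> dd * (n + N)%:R / N%:R <=
     sg * ((\sum_(t < N) X (rshift n t) w) / N%:R - (\sum_(t < n) X (lshift N t) w) / n%:R)) ->
  (P A <= (2 * expR (- varphi R * dd ^+ 2 * n%:R))%:E)%E.
Proof.
move=> n0 N0 ind X01 EX sg2 dd0 mA HA.
have nn : 0 < (n%:R : R) by rewrite ltr0n.
have NN : 0 < (N%:R : R) by rewrite ltr0n.
set lam := 4 * dd * n%:R.
have lam0 : 0 <= lam by rewrite /lam !mulr_ge0 // ltW.
pose c (i : 'I_(n + N)) := if (i < n)%N then - (sg * lam) / n%:R else sg * lam / N%:R.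
have cL t : c (lshift N t) = - (sg * lam) / n%:R by rewrite /c /= ltn_ord.
have cR t : c (rshift n t) = sg * lam / N%:R by rewrite /c /= ltnNge leq_addr.
apply: (le_trans (@gen_bound _ X mu ind X01 EX c (lam * (dd * (n + N)%:R / N%:R)) A mA _)).
  move=> w Aw; rewrite big_split_ord /=.
  under eq_bigr do rewrite cL.
  under [X in _ + X]eq_bigr do rewrite cR.
  rewrite -!mulr_sumr.
  set SZ := \sum_(t < n) X (lshift N t) w.
  set SY := \sum_(t < N) X (rshift n t) w.
  have -> : - (sg * lam) / n%:R * SZ + sg * lam / N%:R * SY =
      lam * (sg * (SY / N%:R - SZ / n%:R)) by ring.
  by apply: ler_wpM2l => //; exact: HA.
rewrite lee_fin ler_pM2l // ler_expR.
rewrite big_split_ord /=.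
under eq_bigr do rewrite cL.
rewrite [\sum_(i < N) _](eq_bigr (fun=> sg * lam / N%:R * mu + (sg * lam / N%:R) ^+ 2 / 8)); last first.
  by move=> i _; rewrite cR.
have sc (k : nat) (K : R) : \sum_(i < k) K = k%:R * K.
  by rewrite sumr_const card_ord mulr_natl.
rewrite !sc.
have e1 : (- (sg * lam) / n%:R) ^+ 2 = lam ^+ 2 / n%:R ^+ 2.
  have -> : (- (sg * lam) / n%:R) ^+ 2 = sg ^+ 2 * (lam ^+ 2 / n%:R ^+ 2).
    by rewrite -exprVn; ring.
  by rewrite sg2 mul1r.
have e2 : (sg * lam / N%:R) ^+ 2 = lam ^+ 2 / N%:R ^+ 2.
  have -> : (sg * lam / N%:R) ^+ 2 = sg ^+ 2 * (lam ^+ 2 / N%:R ^+ 2).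
    by rewrite -exprVn; ring.
  by rewrite sg2 mul1r.
rewrite e1 e2.
have -> : - (lam * (dd * (n + N)%:R / N%:R)) +
    (n%:R * (- (sg * lam) / n%:R * mu + lam ^+ 2 / n%:R ^+ 2 / 8) +
     N%:R * (sg * lam / N%:R * mu + lam ^+ 2 / N%:R ^+ 2 / 8)) =
    - (2 * (dd ^+ 2 * n%:R)) - 2 * dd ^+ 2 * n%:R ^+ 2 / N%:R.
  rewrite /lam natrD. field.
  by rewrite (lt0r_neq0 NN) (lt0r_neq0 nn).
have h0 : 0 <= dd ^+ 2 * n%:R by rewrite mulr_ge0 ?sqr_ge0 // ltW.
have h1 : - (2 * (dd ^+ 2 * n%:R)) <= - varphi R * dd ^+ 2 * n%:R.
  have := varphi_le2 R; rewrite -mulrA mulNr lerN2 => hp.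
  by apply: ler_wpM2r.
have h2 : 0 <= 2 * dd ^+ 2 * n%:R ^+ 2 / N%:R.
  by rewrite divr_ge0 ?mulr_ge0 ?sqr_ge0 // ltW.
lra.
Qed.

End Prob.


Theorem mainTheorem2 (d : measure_display) (T : measurableType d) (R : realType)
  (P : probability T R) (n N : nat) (X : 'I_(n + N) -> {RV P >-> R})
  (mu a dd : R) :
  (0 < n)%N -> (0 < N)%N ->
  mutually_independent_RVs X ->
  identically_distributed_RVs X ->
  (forall i w, 0 <= X i w <= 1) ->
  (forall i, ('E_P[X i] = mu%:E)%E) ->
  0 < dd ->
  let Z := fun t : 'I_n => X (lshift N t) in
  let Y := fun t : 'I_N => X (rshift n t) in
  let Zbar := fun w => (n%:R)^-1 * \sum_(t < n) Z t w in
  let Xbar := fun w => (n%:R * Zbar w + \sum_(t < N) Y t w) / (n + N)%:R in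
  [/\ (P [set w | (Zbar w <= a - dd)%R /\ (a <= Xbar w)%R]
        <= (2 * expR (- varphi R * dd ^+ 2 * n%:R))%:E)%E,
      (P [set w | (a + dd <= Zbar w)%R /\ (Xbar w <= a)%R]
        <= (2 * expR (- varphi R * dd ^+ 2 * n%:R))%:E)%E,
      (forall r : R, 0 <= r ->
         varphi R <= 2 * ((1 + r) / (1 + Num.sqrt r)) ^+ 2),
      (exists2 r : R, 0 <= r &
         varphi R = 2 * ((1 + r) / (1 + Num.sqrt r)) ^+ 2)
    & 137 / 100 < varphi R].
Proof.
move=> n0 N0 ind idd X01 EX dd0 Z Y Zbar Xbar.
have nn : 0 < (n%:R : R) by rewrite ltr0n.
have NN : 0 < (N%:R : R) by rewrite ltr0n.
have mZ : measurable_fun [set: T] Zbar.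
  rewrite /Zbar; apply: measurable_funM => //.
  apply: measurable_sum => t0; exact: measurable_funPT.
have mY : measurable_fun [set: T] (fun w => \sum_(t < N) Y t w).
  apply: measurable_sum => t0; exact: measurable_funPT.
have mXb : measurable_fun [set: T] Xbar.
  rewrite /Xbar; apply: measurable_funM => //.
  apply: measurable_funD => //; apply: measurable_funM => //.
have ZbE w : Zbar w * n%:R = \sum_(t < n) X (lshift N t) w.
  by rewrite /Zbar mulrC mulrA mulfV ?mul1r // lt0r_neq0.
have XbE w : Xbar w * (n + N)%:R = Zbar w * n%:R + \sum_(t < N) X (rshift n t) w.
  rewrite /Xbar divfK; first by rewrite mulrC.
  by rewrite lt0r_neq0 // ltr0n addn_gt0 n0.
split.
- apply: (@two_group _ _ _ P n N X mu 1 dd) => //; first by rewrite expr1n.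
    have -> : [set w | Zbar w <= a - dd /\ a <= Xbar w] =
        Zbar @^-1` `]-oo, a - dd]%classic `&` Xbar @^-1` `[a, +oo[%classic.
      by apply/seteqP; split => w /=; rewrite !in_itv /= ?andbT.
    by apply: measurableI; apply: mpreT => //; exact: measurable_itv.
  move=> w [h1 h2]; rewrite mul1r.
  have := XbE w; have := ZbE w.
  set u := Zbar w; set SZ := \sum_(t < n) X (lshift N t) w.
  set SY := \sum_(t < N) X (rshift n t) w; set x := Xbar w => eZ eX.
  rewrite -eZ mulfK ?lt0r_neq0 //.
  rewrite ler_pdivrMr // mulrBl divfK ?lt0r_neq0 //.
  have e3 : SY = x * (n + N)%:R - u * n%:R by rewrite eX; ring.
  rewrite e3 natrD.
  have : 0 <= (n%:R + N%:R) * (x - a) by rewrite mulr_ge0 ?subr_ge0 //; lra.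
  have : 0 <= (n%:R + N%:R) * (a - dd - u) by rewrite mulr_ge0 ?subr_ge0 //; lra.
  nra.
- apply: (@two_group _ _ _ P n N X mu (-1) dd) => //; first by rewrite sqrrN expr1n.
    have -> : [set w | a + dd <= Zbar w /\ Xbar w <= a] =
        Zbar @^-1` `[a + dd, +oo[%classic `&` Xbar @^-1` `]-oo, a]%classic.
      by apply/seteqP; split => w /=; rewrite !in_itv /= ?andbT.
    by apply: measurableI; apply: mpreT => //; exact: measurable_itv.
  move=> w [h1 h2]; rewrite mulN1r.
  have := XbE w; have := ZbE w.
  set u := Zbar w; set SZ := \sum_(t < n) X (lshift N t) w.
  set SY := \sum_(t < N) X (rshift n t) w; set x := Xbar w => eZ eX.
  rewrite -eZ mulfK ?lt0r_neq0 // opprB.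
  rewrite ler_pdivrMr // mulrBl divfK ?lt0r_neq0 //.
  have e3 : SY = x * (n + N)%:R - u * n%:R by rewrite eX; ring.
  rewrite e3 natrD.
  have : 0 <= (n%:R + N%:R) * (a - x) by rewrite mulr_ge0 ?subr_ge0 //; lra.
  have : 0 <= (n%:R + N%:R) * (u - (a + dd)) by rewrite mulr_ge0 ?subr_ge0 //; lra.
  nra.
- exact: varphi_min.
- exact: varphi_attained.
- exact: varphi_gt.
Qed.
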